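(* Let $M,N$ be finitary matroids on a common ground set $E$ and let $A\subseteq E$. Then every $(M\setminus A,N/A)$-hindrance is also an $(M,N)$-hindrance.
   Context: For $X\subseteq E$, $N.X:=N/(E\setminus X)$. For an ordered pair $(M,N)$ of finitary matroids on a common ground set, an $(M,N)$-hindrance is a set $H$ that is independent but not spanning in the matroid $N.\mathsf{span}_M(H)$, where $\mathsf{span}_M$ is the closure operator of $M$. $M\setminus A$ is deletion and $N/A$ is contraction of $A$ (both matroids on $E\setminus A$). *)

(* Defs.v *)
(* sets are predicates T -> Prop over an arbitrary (possibly
   infinite) type T; a matroid carries its own ground set. *)
From Stdlib Require Import List.

Set Implicit Arguments.

Definition pset (T : Type) := T -> Prop.

Section Matroids.
Variable T : Type.

Definition sub (X Y : pset T) : Prop := forall x, X x -> Y x.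
Definition setU (X Y : pset T) : pset T := fun x => X x \/ Y x.
Definition setD (X Y : pset T) : pset T := fun x => X x /\ ~ Y x.
Definition add1 (X : pset T) (e : T) : pset T := fun x => X x \/ x = e.

Definition is_finite (X : pset T) : Prop :=
  exists l : list T, forall x, X x -> In x l.

Definition is_maximal (P : pset T -> Prop) (X : pset T) : Prop :=
  P X /\ forall Y, P Y -> sub X Y -> sub Y X.

Record setsys := SetSys { ground : pset T; indep : pset T -> Prop }.

(* Matroid axioms (I1)-(I4) of Bruhn, Diestel, Kriesell, Pendavingh, Wollan. *)
Definition is_matroid (M : setsys) : Prop :=
  (forall I, indep M I -> sub I (ground M)) /\
  indep M (fun _ => False) /\
  (forall I J, indep M J -> sub I J -> indep M I) /\
  (forall I B, indep M I -> ~ is_maximal (indep M) I ->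
     is_maximal (indep M) B ->
     exists x, B x /\ ~ I x /\ indep M (add1 I x)) /\
  (forall I X, indep M I -> sub I X -> sub X (ground M) ->
     exists J, is_maximal (fun J => indep M J /\ sub I J /\ sub J X) J).

Definition finitary_matroid (M : setsys) : Prop :=
  is_matroid M /\
  forall I, sub I (ground M) ->
    (forall F, sub F I -> is_finite F -> indep M F) -> indep M I.

Definition span (M : setsys) (X : pset T) : pset T :=
  fun x => X x \/
    (ground M x /\ exists I, sub I X /\ indep M I /\ ~ indep M (add1 I x)).

Definition spanning (M : setsys) (X : pset T) : Prop :=
  forall x, ground M x -> span M X x.

Definition deletion (M : setsys) (A : pset T) : setsys :=
  SetSys (setD (ground M) A)
         (fun I => sub I (setD (ground M) A) /\ indep M I).

Definition contraction (N : setsys) (A : pset T) : setsys :=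
  SetSys (setD (ground N) A)
         (fun I => sub I (setD (ground N) A) /\
            exists J, is_maximal (fun J => indep N J /\ sub J A) J /\
                      indep N (setU I J)).

(* N.X := N / (E \ X) *)
Definition dotrestr (N : setsys) (X : pset T) : setsys :=
  contraction N (setD (ground N) X).

Definition hindrance (M N : setsys) (H : pset T) : Prop :=
  indep (dotrestr N (span M H)) H /\
  ~ spanning (dotrestr N (span M H)) H.

End Matroids.

(* Main.v *)
Require Import Defs.
From Stdlib Require Import List Classical ClassicalEpsilon Lia.
Import ListNotations.

Definition bP (P : Prop) : bool := if excluded_middle_informative P then true else false.
Lemma bP_true (P : Prop) : bP P = true <-> P.
Proof. unfold bP; destruct (excluded_middle_informative P); split; intros; auto; discriminate. Qed.
Lemma bP_false (P : Prop) : bP P = false <-> ~ P.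
Proof. unfold bP; destruct (excluded_middle_informative P); split; intros; auto; try discriminate; tauto. Qed.
Lemma in_filterP {A} (P : A -> Prop) l x : In x (filter (fun y => bP (P y)) l) <-> In x l /\ P x.
Proof. rewrite filter_In, bP_true; tauto. Qed.

Lemma m_I1 {T} (N : setsys T) : is_matroid N -> forall I, indep N I -> sub I (ground N).
Proof. intros [h _]; exact h. Qed.
Lemma m_I3 {T} (N : setsys T) : is_matroid N -> forall I J, indep N J -> sub I J -> indep N I.
Proof. intros [_ [_ [h _]]]; exact (fun I J a b => h I J a b). Qed.
Lemma m_I3' {T} (N : setsys T) : is_matroid N -> forall I B, indep N I -> ~ is_maximal (indep N) I ->
     is_maximal (indep N) B -> exists x, B x /\ ~ I x /\ indep N (add1 I x).
Proof. intros [_ [_ [_ [h _]]]]; exact h. Qed.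
Lemma m_I4 {T} (N : setsys T) : is_matroid N -> forall I X, indep N I -> sub I X -> sub X (ground N) ->
     exists J, is_maximal (fun J => indep N J /\ sub I J /\ sub J X) J.
Proof. intros [_ [_ [_ [_ h]]]]; exact h. Qed.

Lemma EX {T} (N : setsys T) (HM : is_matroid N) (B2 : pset T) (hB2 : is_maximal (indep N) B2) :
  forall l B1, is_maximal (indep N) B1 -> NoDup l -> (forall x, (B1 x /\ ~ B2 x) <-> In x l) ->
  forall m, NoDup m -> (forall x, In x m -> B2 x /\ ~ B1 x) -> length m <= length l.
Proof.
  induction l as [|a l IH]; intros B1 hB1 nd hl m ndm hm.
  - destruct m as [|b m]; simpl; [lia|].
    exfalso. destruct (hm b (or_introl eq_refl)) as [h2 h1].
    apply h1. apply (proj2 hB1 B2 (proj1 hB2)); auto.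
    intros x bx. apply NNPP; intro nb. apply (proj1 (hl x)); auto.
  - assert (Ha : B1 a /\ ~ B2 a) by (apply hl; left; auto).
    set (B1m := fun x => B1 x /\ x <> a).
    assert (iB1m : indep N B1m) by (apply (m_I3 N HM) with B1; [apply hB1| intros x []; auto]).
    assert (nmB1m : ~ is_maximal (indep N) B1m).
    { intros [_ hmx]. assert (B1m a) by (apply (hmx B1 (proj1 hB1)); [intros x []; auto| apply Ha]).
      destruct H; auto. }
    destruct (m_I3' N HM B1m B2 iB1m nmB1m hB2) as [y [hy2 [hy1 hy]]].
    assert (ya : y <> a) by (intro; subst; tauto).
    assert (ny1 : ~ B1 y) by (intro; apply hy1; split; auto).
    set (B1' := add1 B1m y).
    assert (hB1' : is_maximal (indep N) B1').
    { destruct (classic (is_maximal (indep N) B1')) as [h|h]; auto. exfalso.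
      destruct (m_I3' N HM B1' B1 hy h hB1) as [z [hz1 [hz2 hz]]].
      assert (za : z = a).
      { apply NNPP; intro; apply hz2; left; split; auto. }
      subst z. apply ny1.
      assert (sub (add1 B1' a) B1).
      { apply (proj2 hB1); auto. intros x bx. destruct (classic (x = a)) as [e|e].
        right; auto. left; left; split; auto. }
      apply H. left; right; auto. }
    pose (m' := filter (fun x => bP (x <> y)) m).
    assert (Hm' : length m' <= length l).
    { apply (IH B1'); auto.
      - inversion nd; auto.
      - inversion nd; subst. intros x; split.
        + intros [[[b1 xa]|xy] nb2].
          * destruct (proj1 (hl x) (conj b1 nb2)); [congruence|auto].
          * subst; tauto.
        + intros ix. assert (xa : x <> a) by (intro; subst; tauto).
          destruct (proj2 (hl x) (or_intror ix)) as [b1 nb2]. split; auto. left; split; auto.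
      - apply NoDup_filter; auto.
      - intros x ix. apply in_filterP in ix. destruct ix as [ix xy].
        destruct (hm x ix) as [b2 nb1]. split; auto. intros [[b1 _]|e]; auto. }
    assert (length m <= S (length m')).
    { change (S (length m')) with (length (y :: m')). apply NoDup_incl_length; auto.
      intros x ix. destruct (classic (x = y)); [left; auto| right; apply in_filterP; auto]. }
    simpl; lia.
Qed.
Definition Lset {T} (l : list T) : pset T := fun x => In x l.

Lemma AUG {T} (N : setsys T) (HM : is_matroid N) (li lj : list T) :
  NoDup li -> NoDup lj -> indep N (Lset li) -> indep N (Lset lj) -> length li < length lj ->
  exists x, In x lj /\ ~ In x li /\ indep N (add1 (Lset li) x).
Proof.
  intros ndi ndj ii ij hlt. apply NNPP; intro H0.
  assert (H0' : forall x, In x lj -> ~ In x li -> ~ indep N (add1 (Lset li) x))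
    by (intros x a b c; apply H0; exists x; auto).
  clear H0.
  destruct (m_I4 N HM (Lset lj) (ground N) ij (m_I1 N HM _ ij) (fun x h => h)) as [BJ [[iBJ [jBJ gBJ]] mBJ]].
  assert (hBJ : is_maximal (indep N) BJ).
  { split; auto. intros Y iY sY. apply mBJ; repeat split; auto.
    intros x h; apply sY, jBJ; auto. apply (m_I1 N HM _ iY). }
  assert (sX : sub (setU (Lset li) BJ) (ground N)).
  { intros x [h|h]; [apply (m_I1 N HM _ ii); auto| apply gBJ; auto]. }
  destruct (m_I4 N HM (Lset li) (setU (Lset li) BJ) ii (fun x h => or_introl h) sX) as [BI [[iBI [iiBI sBI]] mBI]].
  assert (hBI : is_maximal (indep N) BI).
  { destruct (classic (is_maximal (indep N) BI)) as [h|h]; auto. exfalso.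
    destruct (m_I3' N HM BI BJ iBI h hBJ) as [x [bx [nx ix]]].
    apply nx. apply (mBI (add1 BI x)); [|intros y hy; left; auto|right; auto].
    repeat split; auto. intros y hy; left; apply iiBI; auto.
    intros y [hy|hy]; [apply sBI; auto| subst; right; auto]. }
  assert (nBI : forall x, In x lj -> ~ In x li -> ~ BI x).
  { intros x a b c. apply (H0' x a b). apply (m_I3 N HM) with BI; auto.
    intros y [hy|hy]; [apply iiBI; auto| subst; auto]. }
  pose (l := filter (fun x => bP (~ BJ x)) li).
  pose (m := filter (fun x => bP (~ In x li)) lj).
  assert (hml : length m <= length l).
  { apply (EX N HM BJ hBJ l BI hBI).
    - apply NoDup_filter; auto.
    - intros x; unfold l; rewrite in_filterP; split.
      + intros [b1 nb2]. destruct (sBI x b1); [split; auto| tauto].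
      + intros [h1 h2]; split; [apply iiBI|]; auto.
    - apply NoDup_filter; auto.
    - intros x; unfold m; rewrite in_filterP; intros [h1 h2]; split; [apply jBJ|apply nBI]; auto. }
  assert (h1 : length l <= length (filter (fun x => negb (bP (In x lj))) li)).
  { apply NoDup_incl_length. apply NoDup_filter; auto.
    intros x; unfold l; rewrite in_filterP, filter_In, Bool.negb_true_iff, bP_false.
    intros [a b]; split; [|intro c; apply b, jBJ]; auto. }
  assert (h2 : length m = length (filter (fun x => negb (bP (In x li))) lj)).
  { unfold m. apply f_equal. apply filter_ext. intros x. unfold bP.
    destruct (excluded_middle_informative (~ In x li)); destruct (excluded_middle_informative (In x li)); tauto. }
  assert (h3 : length (filter (fun x => bP (In x lj)) li) = length (filter (fun x => bP (In x li)) lj)).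
  { apply PeanoNat.Nat.le_antisymm; apply NoDup_incl_length; try (apply NoDup_filter; auto);
    intros x; rewrite !in_filterP; tauto. }
  pose proof (filter_length (fun x => bP (In x lj)) li).
  pose proof (filter_length (fun x => bP (In x li)) lj).
  lia.
Qed.
Lemma dep_mono {T} (N : setsys T) (HM : is_matroid N) A B x :
  ~ indep N (add1 A x) -> sub A B -> ~ indep N (add1 B x).
Proof. intros h s i. apply h. apply (m_I3 N HM) with (add1 B x); auto. intros y [a|a]; [left; auto|right; auto]. Qed.

Lemma GREEDY {T} (N : setsys T) (HM : is_matroid N) (L : list T) : forall Y0,
  NoDup Y0 -> indep N (Lset Y0) -> exists Y, incl Y0 Y /\ incl Y (Y0 ++ L) /\ NoDup Y /\
   indep N (Lset Y) /\ forall x, In x L -> ~ In x Y -> ~ indep N (add1 (Lset Y) x).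
Proof.
  induction L as [|a L IH]; intros Y0 nd i.
  - exists Y0; split; [intros x h; auto|split; [intros x h; apply in_app_iff; auto|split; [auto|split; [auto|intros x []]]]].
  - destruct (classic (~ In a Y0 /\ indep N (add1 (Lset Y0) a))) as [[na ia]|h].
    + destruct (IH (a :: Y0)) as [Y [h1 [h2 [h3 [h4 h5]]]]].
      constructor; auto. apply (m_I3 N HM) with (add1 (Lset Y0) a); auto.
      intros x [e|e]; [right; auto|left; auto].
      exists Y; split; [intros x hx; apply h1; right; auto|].
      split; [intros x hx; apply h2 in hx; simpl in hx; rewrite in_app_iff in *; simpl in *; tauto|].
      split; [auto|split; [auto|]].
      intros x [e|e] nx; [subst; exfalso; apply nx, h1; left; auto| apply h5; auto].
    + destruct (IH Y0 nd i) as [Y [h1 [h2 [h3 [h4 h5]]]]].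
      exists Y; split; [auto|].
      split; [intros x hx; apply h2 in hx; rewrite in_app_iff in *; simpl in *; tauto|].
      split; [auto|split; [auto|]].
      intros x [e|e] nx; [subst| apply h5; auto].
      destruct (classic (In x Y0)) as [c|c]; [exfalso; apply nx, h1; auto|].
      apply (dep_mono N HM (Lset Y0)); [intro HH; apply h; split; auto | exact h1].
Qed.

Lemma FKL {T} (N : setsys T) (HM : is_matroid N) (lk lw lv : list T) :
  NoDup lk -> NoDup lw -> NoDup lv ->
  indep N (fun x => In x lk \/ In x lw) -> indep N (Lset lv) ->
  (forall x, In x lk -> In x lv -> False) -> (forall x, In x lk -> In x lw -> False) ->
  (forall v, In v lv -> In v lw \/ ~ indep N (add1 (Lset lw) v)) ->
  indep N (fun x => In x lk \/ In x lv).
Proof.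
  intros ndk ndw ndv ikw iv dkv dkw hv.
  assert (iw : indep N (Lset lw)) by (apply (m_I3 N HM) with (fun x => In x lk \/ In x lw); auto; intros x h; right; auto).
  destruct (GREEDY N HM lw lv ndv iv) as [Y [y1 [y2 [y3 [y4 y5]]]]].
  assert (hY : length Y <= length lw).
  { destruct (Compare_dec.le_lt_dec (length Y) (length lw)) as [c|c]; auto. exfalso.
    destruct (AUG N HM lw Y ndw y3 iw y4 c) as [y [a [b d]]].
    apply y2, in_app_iff in a. destruct a as [a|a]; [|tauto].
    destruct (hv y a); auto. }
  destruct (GREEDY N HM lk Y y3 y4) as [Z [z1 [z2 [z3 [z4 z5]]]]].
  apply (m_I3 N HM) with (Lset Z); auto.
  intros x [hx|hx]; [|apply z1, y1; auto].
  apply NNPP; intro nz.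
  assert (hZ : length Z <= length (Y ++ filter (fun y => bP (y <> x)) lk)).
  { apply NoDup_incl_length; auto. intros y hy0. pose proof (z2 y hy0) as hy. apply in_app_iff in hy. apply in_app_iff.
    destruct hy as [hy|hy]; [left; auto|right]. apply in_filterP; split; [auto|]. intro; subst; auto. }
  assert (hlt : length (filter (fun y => bP (y <> x)) lk) < length lk).
  { pose proof (filter_length (fun y => bP (y <> x)) lk).
    assert (0 < length (filter (fun y => negb (bP (y <> x))) lk)).
    { destruct (filter (fun y => negb (bP (y <> x))) lk) eqn:E; simpl; [|lia].
      assert (In x (filter (fun y => negb (bP (y <> x))) lk)).
      { apply filter_In; split; auto. apply Bool.negb_true_iff, bP_false; tauto. }
      rewrite E in H0; destruct H0. }
    lia. }
  rewrite length_app in hZ.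
  assert (ndkw : NoDup (lk ++ lw)).
  { apply NoDup_app; auto. }
  assert (ikw' : indep N (Lset (lk ++ lw))).
  { apply (m_I3 N HM) with (fun x => In x lk \/ In x lw); auto. intros y hy; apply in_app_iff; auto. }
  destruct (AUG N HM Z (lk ++ lw) z3 ndkw z4 ikw') as [z [a [b d]]].
  { rewrite length_app. lia. }
  apply in_app_iff in a. destruct a as [a|a].
  - apply (z5 z a b); auto.
  - assert (~ In z Y) by (intro; apply b, z1; auto).
    apply (y5 z a H). apply (m_I3 N HM) with (add1 (Lset Z) z); auto.
    intros y [e|e]; [left; apply z1; auto| right; auto].
Qed.
Definition dec {T} (x y : T) : {x = y} + {x <> y} := excluded_middle_informative (x = y).

Lemma fin_dep {T} (N : setsys T) (HF : finitary_matroid N) X :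
  sub X (ground N) -> ~ indep N X -> exists l, (forall x, In x l -> X x) /\ ~ indep N (Lset l).
Proof.
  intros sX nX. destruct HF as [HM HF].
  apply NNPP; intro C. apply nX, HF; auto.
  intros F sF [l0 hl0]. apply NNPP; intro nF. apply C.
  exists (filter (fun x => bP (F x)) l0). split.
  - intros x hx; apply in_filterP in hx; apply sF; tauto.
  - intro i; apply nF. apply (m_I3 N HM) with (Lset (filter (fun x => bP (F x)) l0)); auto.
    intros x hx; apply in_filterP; auto.
Qed.

Lemma collect {T} (N : setsys T) (HF : finitary_matroid N) (W V : pset T) :
  sub V (ground N) ->
  (forall v, V v -> W v \/ exists I, sub I W /\ indep N I /\ ~ indep N (add1 I v)) ->
  forall lv, (forall v, In v lv -> V v) ->
  exists lw, (forall x, In x lw -> W x) /\ forall v, In v lv -> In v lw \/ ~ indep N (add1 (Lset lw) v).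
Proof.
  intros sV H5. pose proof (proj1 HF) as HM.
  induction lv as [|v lv IH]; intros hlv.
  - exists []; split; [intros x []| intros v []].
  - destruct IH as [lw [h1 h2]]. intros x hx; apply hlv; right; auto.
    assert (Hv : exists lv', (forall x, In x lv' -> W x) /\ (In v lv' \/ ~ indep N (add1 (Lset lv') v))).
    { destruct (H5 v (hlv v (or_introl eq_refl))) as [w|[I [sI [iI dI]]]].
      - exists [v]; split; [intros x [e|[]]; subst; auto| left; left; auto].
      - assert (sg : sub (add1 I v) (ground N)).
        { intros x [a|a]; [apply (m_I1 N HM _ iI); auto| subst; apply sV, hlv; left; auto]. }
        destruct (fin_dep N HF _ sg dI) as [l [hl dl]].
        exists (filter (fun x => bP (I x)) l); split.
        + intros x hx; apply in_filterP in hx; apply sI; tauto.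
        + right. intro i; apply dl. apply (m_I3 N HM) with (add1 (Lset (filter (fun x => bP (I x)) l)) v); auto.
          intros x hx. destruct (hl x hx) as [a|a]; [left; apply in_filterP; auto| right; auto]. }
    destruct Hv as [lv' [g1 g2]].
    exists (lv' ++ lw); split.
    + intros x hx; apply in_app_iff in hx; destruct hx; auto.
    + intros u [e|e].
      * subst u. destruct g2 as [g|g]; [left; apply in_app_iff; auto| right].
        apply (dep_mono N HM (Lset lv')); auto. intros x hx; apply in_app_iff; auto.
      * destruct (h2 u e) as [g|g]; [left; apply in_app_iff; auto| right].
        apply (dep_mono N HM (Lset lw)); auto. intros x hx; apply in_app_iff; auto.
Qed.

Lemma KL {T} (N : setsys T) (HF : finitary_matroid N) (K W V : pset T) :
  indep N (setU K W) -> indep N V -> (forall x, K x -> W x -> False) ->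
  (forall v, V v -> W v \/ exists I, sub I W /\ indep N I /\ ~ indep N (add1 I v)) ->
  indep N (setU K V).
Proof.
  intros ikw iv dkw H5. pose proof (proj1 HF) as HM.
  assert (sV : sub V (ground N)) by (apply (m_I1 N HM); auto).
  apply (proj2 HF).
  { intros x [a|a]; [apply (m_I1 N HM _ ikw); left; auto| apply sV; auto]. }
  intros F sF [l hl].
  set (lk := nodup dec (filter (fun x => bP (F x /\ K x)) l)).
  set (lv := nodup dec (filter (fun x => bP (F x /\ V x /\ ~ K x)) l)).
  assert (Elk : forall x, In x lk <-> In x l /\ F x /\ K x).
  { intros x; unfold lk; rewrite nodup_In, in_filterP; tauto. }
  assert (Elv : forall x, In x lv <-> In x l /\ F x /\ V x /\ ~ K x).
  { intros x; unfold lv; rewrite nodup_In, in_filterP; tauto. }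
  destruct (collect N HF W V sV H5 lv) as [lw0 [w1 w2]].
  { intros v hv; apply Elv in hv; tauto. }
  set (lw := nodup dec lw0).
  assert (Elw : forall x, In x lw <-> In x lw0) by (intros x; unfold lw; rewrite nodup_In; tauto).
  assert (I : indep N (fun x => In x lk \/ In x lv)).
  { apply FKL with lw; auto; try apply NoDup_nodup.
    - apply (m_I3 N HM) with (setU K W); auto.
      intros x [a|a]; [apply Elk in a; left; tauto| apply Elw in a; right; auto].
    - apply (m_I3 N HM) with V; auto. intros x a; apply Elv in a; tauto.
    - intros x a b; apply Elk in a; apply Elv in b; tauto.
    - intros x a b; apply Elk in a; apply Elw in b; apply (dkw x); [tauto| auto].
    - intros v hv. destruct (w2 v hv) as [g|g]; [left; apply Elw; auto| right].
      apply (dep_mono N HM (Lset lw0)); auto. intros x hx; apply Elw; auto. }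
  apply (m_I3 N HM) with (fun x => In x lk \/ In x lv); auto.
  intros x hx. destruct (classic (K x)) as [k|k].
  - left; apply Elk; auto.
  - right; apply Elv. pose proof (hl x hx). destruct (sF x hx); tauto.
Qed.
Lemma Sprime_sub {T} (M : setsys T) (A H : pset T) x :
  span (deletion M A) H x -> span M H x.
Proof.
  intros [h|[g [I [sI [iI dI]]]]]; [left; auto| right].
  cbn in g, iI, dI. split; [apply g|]. exists I; split; [auto|split; [apply iI|]].
  intro i; apply dI; split; auto.
  intros y [a|a]; [apply (proj1 iI); auto| subst; auto].
Qed.

Lemma TR {T} (M N : setsys T) (A H : pset T) (HF : finitary_matroid N) K :
  indep (dotrestr (contraction N A) (span (deletion M A) H)) K ->
  indep (dotrestr N (span M H)) K.
Proof.
  pose proof (proj1 HF) as HM.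
  set (S := span M H). set (S' := span (deletion M A) H).
  assert (SS : forall x, S' x -> S x) by (intros x; apply Sprime_sub).
  cbn. intros [sK [J1 [[[iJ1 sJ1S] mJ1] [sKJ1 [J0 [[[iJ0 sJ0] mJ0] iKJ]]]]]].
  split.
  { intros x kx. destruct (sK x kx) as [[e na] ns]. split; auto.
    intros [_ c]. apply ns; split; [split; auto|]. intro s; apply c, SS; auto. }
  destruct (m_I4 N HM (fun _ => False) (setD (ground N) S) (proj1 (proj2 HM)) (fun x f => match f with end)
     (fun x h => proj1 h)) as [J [[iJ [_ sJ]] mJ]].
  exists J. split.
  { split; [split; auto|]. intros Y [iY sY] sub'. apply mJ; auto. split; [auto|split; auto]. intros x []. }
  assert (KS' : forall x, K x -> S' x /\ ~ A x).
  { intros x kx. destruct (sK x kx) as [[e na] ns]. split; auto. apply NNPP; intro c; apply ns; split; auto. split; auto. }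
  apply (KL N HF K (setU J1 J0) J).
  - apply (m_I3 N HM) with (setU (setU K J1) J0); auto.
    intros x [a|[a|a]]; [left; left| left; right| right]; auto.
  - exact iJ.
  - intros x kx [a|a].
    + destruct (sJ1S x a) as [_ c]. apply c, KS'; auto.
    + apply (KS' x kx), sJ0; auto.
  - intros v jv. destruct (sJ v jv) as [ev nsv].
    destruct (classic (A v)) as [av|av].
    + destruct (classic (J0 v)) as [j0|j0]; [left; right; auto| right].
      exists J0; split; [intros y hy; right; auto| split; [auto|]].
      intro i. apply j0. apply (mJ0 (add1 J0 v)); [split; auto| intros y hy; left; auto| right; auto].
      intros y [a|a]; [apply sJ0; auto| subst; auto].
    + destruct (classic (J1 v)) as [j1|j1]; [left; left; auto| right].
      exists (setU J1 J0); split; [intros y hy; exact hy| split].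
      * apply (m_I3 N HM) with (setU (setU K J1) J0); auto.
        intros x [a|a]; [left; right| right]; auto.
      * intro i. apply j1.
        assert (sJ1v : sub (add1 J1 v) (setD (setD (ground N) A) S')).
        { intros y [a|a]; [apply sJ1S; auto| subst; split; [split; auto| intro c; apply nsv, SS; auto]]. }
        apply (mJ1 (add1 J1 v)); [| intros y hy; left; auto| right; auto].
        split; auto. split.
        { intros y hy; apply sJ1v in hy; apply hy. }
        exists J0. split; [split; [split; auto| auto]|].
        apply (m_I3 N HM) with (add1 (setU J1 J0) v); auto.
        intros y [[a|a]|a]; [left; left| right| left; right]; auto.
Qed.

Lemma sub_indep_dot {T} (N : setsys T) (A S H I : pset T) (HM : is_matroid N) :
  indep (dotrestr (contraction N A) S) H -> sub I H -> indep (dotrestr (contraction N A) S) I.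
Proof.
  cbn. intros [sH [J1 [mJ1 [sHJ [J0 [mJ0 iHJ]]]]]] sI.
  split; [intros x h; apply sH, sI; auto|].
  exists J1; split; auto. split.
  { intros x [a|a]; apply sHJ; [left; apply sI|right]; auto. }
  exists J0; split; auto. apply (m_I3 N HM) with (setU (setU H J1) J0); auto.
  intros x [[a|a]|a]; [left; left; apply sI| left; right| right]; auto.
Qed.

Theorem mainTheorem5 (T : Type) (M N : setsys T) (A : pset T) :
  finitary_matroid M -> finitary_matroid N ->
  (forall x, ground M x <-> ground N x) ->
  sub A (ground M) ->
  forall H : pset T,
    hindrance (deletion M A) (contraction N A) H -> hindrance M N H.
Proof.
  intros HFM HFN hE sA H [ia nsp].
  pose proof (proj1 HFN) as HM.
  split.
  - apply (TR M N A H HFN H ia).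
  - intro sp. apply nsp. intros x gx.
    assert (gx' : ground (dotrestr N (span M H)) x).
    { cbn in gx |- *. destruct gx as [[e na] ns]. split; [auto|].
      intros [_ c]. apply ns; split; [split; auto|]. intro s; apply c, Sprime_sub with A; auto. }
    destruct (sp x gx') as [h|[_ [I [sI [iI dI]]]]]; [left; auto| right].
    split; [exact gx|]. exists I; split; [auto| split].
    + apply sub_indep_dot with H; auto.
    + intro i; apply dI. apply (TR M N A H HFN (add1 I x) i).
Qed.
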